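(* For any integer $k\ge0$, code-tuple $F$, $i\in[F]$ and $\pmb{b}\in\mathcal{C}^{\ast}$: (i) $\mathcal{P}^k_{F,i}(\pmb{b})=\bar{\mathcal{P}}^k_{F,i}(\pmb{b})\cup\bigcup_{s\in\mathcal{S}_{F,i}(\pmb{b})}\mathcal{P}^k_{F,\tau_i(s)}$; (ii) if $F$ is $k$-bit delay decodable, then $|\mathcal{P}^k_{F,i}(\pmb{b})|=|\bar{\mathcal{P}}^k_{F,i}(\pmb{b})|+\sum_{s\in\mathcal{S}_{F,i}(\pmb{b})}|\mathcal{P}^k_{F,\tau_i(s)}|$; (iii) if $k\ge1$, then $\bar{\mathcal{P}}^k_{F,i}(\pmb{b})=0\mathcal{P}^{k-1}_{F,i}(\pmb{b}0)\cup 1\mathcal{P}^{k-1}_{F,i}(\pmb{b}1)$.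
   Context: $\mathcal{S}$ is a finite source alphabet with $|\mathcal{S}|\ge 2$ and $\mathcal{C}=\{0,1\}$. $\mathcal{A}^k,\mathcal{A}^{\ast},\mathcal{A}^{+}$ are the sequences over $\mathcal{A}$ of length $k$, finite length, finite positive length; $\lambda$ is the empty sequence. $\pmb{x}\preceq\pmb{y}$: $\pmb{x}$ is a prefix of $\pmb{y}$; $\pmb{x}\prec\pmb{y}$: proper prefix. For nonempty $\pmb{x}=x_1\cdots x_n$, $\mathrm{suff}(\pmb{x})=x_2\cdots x_n$. For $c\in\mathcal{C}$ and $\mathcal{A}\subseteq\mathcal{C}^{\ast}$, $c\mathcal{A}=\{c\pmb{a}:\pmb{a}\in\mathcal{A}\}$. A code-tuple $F$ with $m\ge1$ code tables is a tuple of maps $f_0,\dots,f_{m-1}:\mathcal{S}\to\mathcal{C}^{\ast}$ and $\tau_0,\dots,\tau_{m-1}:\mathcal{S}\to\{0,\dots,m-1\}$; $[F]=\{0,\dots,m-1\}$. Define $f_i^{\ast}(\lambda)=\lambda$ and $f_i^{\ast}(\pmb{x})=f_i(x_1)f^{\ast}_{\tau_i(x_1)}(\mathrm{suff}(\pmb{x}))$ for $\pmb{x}=x_1\cdots x_n\ne\lambda$. $\mathcal{S}_{F,i}(\pmb{b})=\{s:f_i(s)=\pmb{b}\}$. For integer $k\ge0$, $\mathcal{P}^k_{F,i}(\pmb{b})$ is the set of $\pmb{c}\in\mathcal{C}^k$ such that some $\pmb{x}=x_1\cdots x_n\in\mathcal{S}^{+}$ satisfies $f_i^{\ast}(\pmb{x})\succeq\pmb{b}\pmb{c}$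 and $f_i(x_1)\succeq\pmb{b}$; $\bar{\mathcal{P}}^k_{F,i}(\pmb{b})$ is the same with $f_i(x_1)\succ\pmb{b}$; $\mathcal{P}^k_{F,i}=\mathcal{P}^k_{F,i}(\lambda)$. $F$ is $k$-bit delay decodable if (i) $\mathcal{P}^k_{F,\tau_i(s)}\cap\bar{\mathcal{P}}^k_{F,i}(f_i(s))=\emptyset$ for all $i\in[F]$, $s\in\mathcal{S}$, and (ii) $\mathcal{P}^k_{F,\tau_i(s)}\cap\mathcal{P}^k_{F,\tau_i(s')}=\emptyset$ whenever $s\ne s'$ and $f_i(s)=f_i(s')$. *)

(* Defs.v *)
From HB Require Import structures.
From mathcomp Require Import all_boot.
From mathcomp Require Import boolp.
Set Implicit Arguments. Unset Strict Implicit. Unset Printing Implicit Defensive.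

(* Code alphabet C = {0,1} is rendered as bool (false = 0, true = 1). *)
Record codeTuple (S : finType) (m : nat) := CodeTuple {
  ct_f : 'I_m -> S -> seq bool;
  ct_tau : 'I_m -> S -> 'I_m }.

Section Defs.
Variables (S : finType) (m : nat) (F : codeTuple S m).

Fixpoint fstar (i : 'I_m) (x : seq S) : seq bool :=
  match x with
  | [::] => [::]
  | s :: x' => ct_f F i s ++ fstar (ct_tau F i s) x'
  end.

Definition Sset (i : 'I_m) (b : seq bool) : {set S} :=
  [set s | ct_f F i s == b].

(* P^k_{F,i}(b): x = s :: x' ranges over S^+ with x_1 = s *)
Definition Pset (k : nat) (i : 'I_m) (b : seq bool) : {set k.-tuple bool} :=
  [set c : k.-tuple bool | `[< exists (s : S) (x' : seq S),
      prefix (b ++ val c) (fstar i (s :: x')) && prefix b (ct_f F i s) >]].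

Definition Pbarset (k : nat) (i : 'I_m) (b : seq bool) : {set k.-tuple bool} :=
  [set c : k.-tuple bool | `[< exists (s : S) (x' : seq S),
      [&& prefix (b ++ val c) (fstar i (s :: x')),
          prefix b (ct_f F i s) & b != ct_f F i s] >]].

Definition P0set (k : nat) (i : 'I_m) : {set k.-tuple bool} := Pset k i [::].

Definition k_bit_delay_decodable (k : nat) : Prop :=
  (forall (i : 'I_m) (s : S),
      P0set k (ct_tau F i s) :&: Pbarset k i (ct_f F i s) = set0) /\
  (forall (i : 'I_m) (s s' : S), s != s' -> ct_f F i s = ct_f F i s' ->
      P0set k (ct_tau F i s) :&: P0set k (ct_tau F i s') = set0).

End Defs.

Definition consset (k : nat) (c : bool) (A : {set k.-tuple bool})
  : {set k.+1.-tuple bool} := [set cons_tuple c t | t in A].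

(* Main.v *)
Require Import Defs.
From HB Require Import structures.
From mathcomp Require Import all_boot.
From mathcomp Require Import boolp.

Lemma card_bigcup_disj (I T : finType) (F : I -> {set T}) (A : {set I}) :
  {in A &, forall i j, i != j -> [disjoint F i & F j]} ->
  #|\bigcup_(i in A) F i| = \sum_(i in A) #|F i|.
Proof.
move: {2}#|A| (erefl #|A|) => n; elim: n A => [|n IH] A HA Hd.
  move/eqP: HA; rewrite cards_eq0 => /eqP ->.
  by rewrite !big_set0 cards0.
case: (set_0Vmem A) => [A0|[x xA]]; first by rewrite A0 cards0 in HA.
rewrite (big_setD1 x xA) (big_setD1 x xA) /=.
have HA' : #|A :\ x| = n by move: HA; rewrite (cardsD1 x A) xA add1n => [[]].
rewrite -IH //; last first.
  by move=> i j /setD1P[_ iA] /setD1P[_ jA]; apply: Hd.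
apply/eqP; rewrite (leq_card_setU _ _).2.
apply: bigcup_disjoint => i /setD1P[ix iA]; apply: Hd => //; by rewrite eq_sym.
Qed.

Section L.
Variables (S : finType) (m : nat) (F : codeTuple S m).

Lemma barstep (b f r : seq bool) c0 c' :
  prefix b f -> b != f -> prefix (b ++ c0 :: c') (f ++ r) ->
  prefix (rcons b c0) f.
Proof.
move=> /prefixP[d ->]; case: d => [|d0 d]; first by rewrite cats0 eqxx.
move=> _ H; rewrite -catA prefix_catr // in H.
rewrite eqxx /= in H; case/andP: H => /eqP <- _.
by rewrite -cats1 prefix_catr // eqxx /= eqxx; case: d.
Qed.

Lemma barback (b f : seq bool) c0 :
  prefix (rcons b c0) f -> prefix b f && (b != f).
Proof.
move=> H; rewrite -cats1 in H; rewrite (catl_prefix H) /=.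
apply/eqP => E; move: (size_prefix H); rewrite size_cat -E /=.
by rewrite addn1 ltnn.
Qed.


Lemma part1 (HS : 1 < #|S|) i b k :
  Pset F k i b =
  Pbarset F k i b :|: \bigcup_(s in Sset F i b) P0set F k (ct_tau F i s).
Proof.
apply/setP => c; rewrite !inE; apply/idP/idP.
  move/asboolP => [s [x' /andP[H1 H2]]].
  case E: (b == ct_f F i s).
    move/eqP: E => E; apply/orP; right; apply/bigcupP; exists s.
      by rewrite inE -E.
    rewrite inE; apply/asboolP; case: x' H1 => [|s' x''] H1 /=.
      have Hc : size (val c) = 0.
        move: (size_prefix H1); rewrite /= cats0 size_cat -E.
        by rewrite -{2}(addn0 (size b)) leq_add2l leqn0 => /eqP.
      case: (pickP (@predT S)) => [s0 _|H0]; last first.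
        by move: HS; rewrite (eq_card0 H0).
      exists s0, [::]; rewrite prefix0s andbT.
      by move/size0nil: Hc => ->; rewrite prefix0s.
    exists s', x''; rewrite prefix0s andbT /=.
    by move: H1; rewrite /= -E prefix_catr // eqxx.
  apply/orP; left; apply/asboolP; exists s, x'; by rewrite H1 H2 E.
case/orP => [/asboolP [s [x' /and3P[H1 H2 _]]] | /bigcupP[s]].
  by apply/asboolP; exists s, x'; rewrite H1 H2.
rewrite inE => /eqP Es; rewrite inE => /asboolP [s' [x'' /andP[H1 _]]].
apply/asboolP; exists s, (s' :: x'').
by rewrite /= Es prefix_refl andbT prefix_catr // eqxx.
Qed.

Lemma part3 i b k' :
  Pbarset F k'.+1 i b =
  consset false (Pset F k' i (rcons b false))
    :|: consset true (Pset F k' i (rcons b true)).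
Proof.
apply/setP => c; case/tupleP: c => c0 c'; apply/idP/idP.
  rewrite inE => /asboolP [s [x' /and3P[H1 H2 H3]]].
  have H4 := @barstep b (ct_f F i s) (fstar F (ct_tau F i s) x') c0 c' H2 H3 H1.
  have Hc : c' \in Pset F k' i (rcons b c0).
    by rewrite inE; apply/asboolP; exists s, x'; rewrite H4 andbT cat_rcons.
  by apply/setUP; case: c0 {H1 H4} Hc => Hc; [right|left]; apply/imsetP; exists c'.
case/setUP => /imsetP [t Ht Eq]; move/(congr1 val): Eq => /= [-> /val_inj ->];
  move: Ht; rewrite !inE => /asboolP[s [x' /andP[H1 H2]]];
  apply/asboolP; exists s, x'; case/andP: (barback _ _ _ H2) => -> ->;
  by rewrite -cat_rcons H1.
Qed.

End L.

Theorem lemma3 (S : finType) (m : nat) (HS : 1 < #|S|)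
    (F : codeTuple S m) (i : 'I_m) (b : seq bool) :
  (* (i) *)
  (forall k : nat,
     Pset F k i b =
     Pbarset F k i b :|: \bigcup_(s in Sset F i b) P0set F k (ct_tau F i s)) /\
  (* (ii) *)
  (forall k : nat, k_bit_delay_decodable F k ->
     #|Pset F k i b| =
     #|Pbarset F k i b| + \sum_(s in Sset F i b) #|P0set F k (ct_tau F i s)|) /\
  (* (iii), for k = k'.+1 >= 1, with k - 1 = k' *)
  (forall k' : nat,
     Pbarset F k'.+1 i b =
     consset false (Pset F k' i (rcons b false))
       :|: consset true (Pset F k' i (rcons b true))).
Proof.
split; first by move=> k; apply: part1.
split; last by move=> k'; apply: part3.
move=> k [D1 D2]; rewrite part1 // -card_bigcup_disj; last first.
  move=> s s'; rewrite !inE => /eqP Es /eqP Es' ne.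
  by rewrite -setI_eq0 D2 // Es Es'.
apply/eqP; rewrite (leq_card_setU _ _).2.
apply: bigcup_disjoint => s; rewrite inE => /eqP Es.
by rewrite -setI_eq0 setIC -Es D1.
Qed.
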